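(* Let $R$ be a unique factorization domain. Let $n,m\geqslant 1$, $s_1,\dots,s_n\in(\operatorname{Sqf} R)\setminus R^{\ast}$ and $t_1,\dots,t_m\in(\operatorname{Sqf} R)\setminus R^{\ast}$, integers $k_1,\dots,k_n\geqslant 1$ and $l_1,\dots,l_m\geqslant 1$, and $c,d\in R^{\ast}$, such that $s_i\mid s_{i+1}$ and $s_i\not\sim s_{i+1}$ for $i=1,\dots,n-1$, and $t_i\mid t_{i+1}$ and $t_i\not\sim t_{i+1}$ for $i=1,\dots,m-1$. If $$c\,s_1^{k_1}s_2^{k_2}\cdots s_n^{k_n}=d\,t_1^{l_1}t_2^{l_2}\cdots t_m^{l_m},$$ then $n=m$, and $s_i\sim t_i$ and $k_i=l_i$ for $i=1,\dots,n$.
   Context: $R^{\ast}$ denotes the set of invertible elements of $R$; $a\sim b$ means $a$ and $b$ are associated; $a\mid b$ means $a$ divides $b$. An element $a\in R$ is square-free if it cannot be written as $a=b^2c$ with $b\in R\setminus R^{\ast}$ and $c\in R$; $\operatorname{Sqf} R$ denotes the set of square-free elements of $R$. *)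

(* Defs.v *)
From mathcomp Require Import all_boot all_algebra.
Set Implicit Arguments. Unset Strict Implicit. Unset Printing Implicit Defensive.
Import GRing.Theory.
Local Open Scope ring_scope.

Definition dvdR {R : comRingType} (a b : R) : Prop := exists c : R, b = c * a.

Definition assocR {R : comUnitRingType} (a b : R) : Prop :=
  exists2 u : R, u \is a GRing.unit & b = u * a.

Definition irreducibleR {R : comUnitRingType} (p : R) : Prop :=
  [/\ p != 0, p \isn't a GRing.unit &
      forall a b : R, p = a * b -> a \is a GRing.unit \/ b \is a GRing.unit].

Definition isUFD (R : idomainType) : Prop :=
  (forall x : R, x != 0 -> x \isn't a GRing.unit ->
     exists s : seq R, (forall p, p \in s -> irreducibleR p) /\
                       x = \prod_(p <- s) p) /\
  (forall s t : seq R,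
     (forall p, p \in s -> irreducibleR p) ->
     (forall p, p \in t -> irreducibleR p) ->
     \prod_(p <- s) p = \prod_(p <- t) p ->
     exists t' : seq R, perm_eq t t' /\ size s = size t' /\
       forall i, (i < size s)%N -> assocR (nth 0 s i) (nth 0 t' i)).

Definition squarefree {R : comUnitRingType} (a : R) : Prop :=
  ~ exists b c : R, b \isn't a GRing.unit /\ a = b ^+ 2 * c.

(* Main.v *)
Require Import Defs.
From mathcomp Require Import all_boot all_algebra.
From mathcomp Require Import ring zify.
Import GRing.Theory.
Local Open Scope ring_scope.
Set Implicit Arguments. Unset Strict Implicit.

Lemma dvdR_refl (R : comUnitRingType) (a : R) : dvdR a a.
Proof. by exists 1; rewrite mul1r. Qed.
Lemma dvdR_trans (R : comUnitRingType) (a b c : R) : dvdR a b -> dvdR b c -> dvdR a c.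
Proof. by move=> [x ->] [y ->]; exists (y * x); rewrite mulrA. Qed.
Lemma dvdR_mull (R : comUnitRingType) (a b x : R) : dvdR a b -> dvdR a (x * b).
Proof. by move=> [y ->]; exists (x * y); rewrite mulrA. Qed.
Lemma dvdR_mul2 (R : comUnitRingType) (a b a' b' : R) :
  dvdR a b -> dvdR a' b' -> dvdR (a * a') (b * b').
Proof. by move=> [x ->] [y ->]; exists (x * y); ring. Qed.
Lemma dvdR0 (R : comUnitRingType) (a : R) : dvdR a 0.
Proof. by exists 0; rewrite mul0r. Qed.
Lemma dvdR_unit (R : comUnitRingType) (a b u : R) :
  u \is a GRing.unit -> dvdR a (u * b) -> dvdR a b.
Proof.
move=> uu [x hx]; exists (u^-1 * x).
by rewrite -mulrA -hx mulKr.
Qed.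
Lemma dvdR_X (R : comUnitRingType) (a b : R) n : dvdR a b -> dvdR (a ^+ n) (b ^+ n).
Proof. by move=> [x ->]; exists (x ^+ n); rewrite exprMn. Qed.

Lemma assoc_sym (R : comUnitRingType) (a b : R) : assocR a b -> assocR b a.
Proof.
move=> [u uu ->]; exists u^-1; first by rewrite unitrV.
by rewrite mulKr.
Qed.
Lemma assoc_trans (R : comUnitRingType) (a b c : R) : assocR a b -> assocR b c -> assocR a c.
Proof.
move=> [u uu ->] [v vv ->]; exists (v * u); first by rewrite unitrM uu vv.
by rewrite mulrA.
Qed.

Lemma dvd_assoc (R : idomainType) (a b : R) : a != 0 -> dvdR a b -> dvdR b a -> assocR a b.
Proof.
move=> a0 [x hx] [y hy]; exists x => //.
have : (y * x) * a = 1 * a by rewrite mul1r -mulrA -hx.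
move/(mulIf a0) => e.
by have := unitr1 R; rewrite -e unitrM => /andP[].
Qed.

Lemma irred_unit (R : comUnitRingType) (p u : R) :
  irreducibleR p -> u \is a GRing.unit -> irreducibleR (u * p).
Proof.
move=> [p0 pu ir] uu; split.
- apply/eqP => e; move/eqP: p0; apply; by rewrite -(mulKr uu p) e mulr0.
- by rewrite unitrM uu.
- move=> a b e.
  have : p = (u^-1 * a) * b by rewrite -mulrA -e mulKr.
  move/ir => [h|h]; last by right.
  left; have -> : a = u * (u^-1 * a) by rewrite mulrA divrr // mul1r.
  by rewrite unitrM uu.
Qed.

Lemma sqf_neq0 (R : comUnitRingType) (a : R) : squarefree a -> a != 0.
Proof.
move=> sq; apply/eqP => a0; apply: sq; exists 0, 0; split.
- by rewrite unitr0.
- by rewrite a0 mulr0.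
Qed.

Lemma mem_prod_dvd (R : comUnitRingType) (s : seq R) q : q \in s -> dvdR q (\prod_(p <- s) p).
Proof.
move=> qs; rewrite (big_rem _ qs) /=.
by exists (\prod_(y <- rem q s) y); rewrite mulrC.
Qed.

Goal True. Abort. Lemma factor (R : idomainType) (HR : isUFD R) (x : R) : x != 0 ->
  exists u s, [/\ u \is a GRing.unit, (forall p, p \in s -> irreducibleR p) &
                  x = u * \prod_(p <- s) p].
Proof.
move=> x0; case: (boolP (x \is a GRing.unit)) => xu.
  by exists x, [::]; split => //; rewrite big_nil mulr1.
have [s [hs e]] := HR.1 x x0 xu.
by exists 1, s; split; rewrite ?unitr1 ?mul1r.
Qed.
Lemma assoc_dvd (R : comUnitRingType) (p q a w v : R) :
  dvdR q a -> v \is a GRing.unit -> w \is a GRing.unit -> w * p = v * q -> dvdR p a.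
Proof.
move=> [x ->] vu wu e; exists (x * v^-1 * w).
have -> : q = v^-1 * (w * p) by rewrite e mulKr.
by rewrite !mulrA.
Qed.


Lemma prime_irr (R : idomainType) (HR : isUFD R) (p a b : R) :
  irreducibleR p -> dvdR p (a * b) -> dvdR p a \/ dvdR p b.
Proof.
have [->|a0] := eqVneq a 0; first by left; apply: dvdR0.
have [->|b0] := eqVneq b 0; first by right; apply: dvdR0.
move=> irrp [e he].
have e0 : e != 0.
  apply/eqP => e0; move: he; rewrite e0 mul0r => /eqP; by rewrite mulf_eq0 (negPf a0) (negPf b0).
have [ua [sa [uau hsa ea]]] := factor HR a0.
have [ub [sb [ubu hsb eb]]] := factor HR b0.
have [ue [se [ueu hse ee]]] := factor HR e0.
set w := ue / (ua * ub).
have uab : ua * ub \is a GRing.unit by rewrite unitrM uau ubu.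
have wu : w \is a GRing.unit by rewrite /w unitrM ueu unitrV.
have E : \prod_(q <- sa ++ sb) q = \prod_(q <- (w * p) :: se) q.
  rewrite big_cat big_cons /=; apply: (mulrI uab).
  have -> : ua * ub * (w * p * \prod_(j <- se) j) = (w * (ua * ub)) * (p * \prod_(j <- se) j) by ring.
  rewrite /w divrK //; transitivity (a * b); first by rewrite ea eb; ring.
  by rewrite he ee; ring.
have hirr : forall q, q \in (w * p) :: se -> irreducibleR q.
  move=> q; rewrite in_cons => /orP[/eqP ->|]; [exact: irred_unit | exact: hse].
have hirr2 : forall q, q \in sa ++ sb -> irreducibleR q.
  move=> q; rewrite mem_cat => /orP[]; [exact: hsa | exact: hsb].
have [t' [pt [sz hn]]] := HR.2 _ _ hirr2 hirr E.
have wpt : w * p \in t' by rewrite -(perm_mem pt) mem_head.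
set i := index (w * p) t'.
have ilt : (i < size (sa ++ sb))%N by rewrite sz index_mem.
have [v vu hv] := hn i ilt.
rewrite /i nth_index // in hv.
have := mem_nth 0 ilt; rewrite mem_cat => /orP[] qin.
- left; apply: (assoc_dvd _ vu wu hv).
  apply: (dvdR_trans (mem_prod_dvd qin)); rewrite ea; apply: dvdR_mull; exact: dvdR_refl.
- right; apply: (assoc_dvd _ vu wu hv).
  apply: (dvdR_trans (mem_prod_dvd qin)); rewrite eb; apply: dvdR_mull; exact: dvdR_refl.
Qed.

Lemma dvd1_unit (R : comUnitRingType) (p : R) : dvdR p 1 -> p \is a GRing.unit.
Proof.
by move=> [x hx]; have := unitr1 R; rewrite hx unitrM => /andP[].
Qed.

Lemma primeX (R : idomainType) (HR : isUFD R) (p y : R) L :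
  irreducibleR p -> dvdR p (y ^+ L) -> dvdR p y.
Proof.
move=> irrp; elim: L => [|L IH].
  rewrite expr0 => /dvd1_unit pu; by case: irrp => _ /negP.
rewrite exprS => /(prime_irr HR irrp) [] //.
Qed.

Lemma sqf_prod_dvd (R : idomainType) (HR : isUFD R) (qs : seq R) : forall y : R,
  (forall q, q \in qs -> irreducibleR q) -> squarefree (\prod_(q <- qs) q) ->
  (forall q, q \in qs -> dvdR q y) -> dvdR (\prod_(q <- qs) q) y.
Proof.
elim: qs => [|q r IH] y hirr sq hd.
  by rewrite big_nil; exists y; rewrite mulr1.
rewrite big_cons in sq *.
have [y' ey] := hd q (mem_head _ _).
have hr : forall q', q' \in r -> irreducibleR q'.
  by move=> q' h; apply: hirr; rewrite in_cons h orbT.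
have sqr : squarefree (\prod_(j <- r) j).
  move=> [b [c [bu e]]]; apply: sq; exists b, (c * q); split => //.
  by rewrite e; ring.
have : dvdR (\prod_(j <- r) j) y'.
  apply: IH => // q' q'r.
  have h' : q' \in q :: r by rewrite in_cons q'r orbT.
  have := hd q' h'; rewrite ey.
  move/(prime_irr HR (hr _ q'r)) => [] // [e eq].
  have [_ _ hq] := hirr q (mem_head _ _).
  have [eu|] := hq _ _ eq; last by have [_ /negP] := hr _ q'r.
  exfalso; apply: sq; exists q', (e * \prod_(j <- rem q' r) j); split.
    by have [_ ] := hr _ q'r.
  by rewrite (big_rem _ q'r) /= eq; ring.
move=> [z hz]; rewrite ey hz; exists z; ring.
Qed.

Lemma sqf_dvd (R : idomainType) (HR : isUFD R) (s y : R) L :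
  squarefree s -> dvdR s (y ^+ L) -> dvdR s y.
Proof.
move=> sq hd.
have [u [qs [uu hq es]]] := factor HR (sqf_neq0 sq).
have sq' : squarefree (\prod_(q <- qs) q).
  move=> [b [c [bu e]]]; apply: sq; exists b, (u * c); split => //.
  by rewrite es e; ring.
have : dvdR (\prod_(q <- qs) q) y.
  apply: sqf_prod_dvd => // q qin; apply: (primeX HR (L := L) (hq _ qin)).
  apply: dvdR_trans (mem_prod_dvd qin) _; apply: dvdR_trans hd.
  by rewrite es; apply: dvdR_mull; apply: dvdR_refl.
move=> [z hz]; exists (z * u^-1); rewrite hz es; by rewrite mulrA divrK.
Qed.

Lemma chain_dvd (R : comUnitRingType) (s : nat -> R) n' :
  (forall i, (i.+1 < n'.+1)%N -> dvdR (s i) (s i.+1)) ->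
  forall i, (i <= n')%N -> dvdR (s i) (s n').
Proof.
move=> hc.
suff H : forall j i, (i + j)%N = n' -> dvdR (s i) (s n').
  by move=> i hi; apply: (H (n' - i)%N); lia.
elim=> [|j IH] i hij.
  by rewrite addn0 in hij; rewrite hij; apply: dvdR_refl.
apply: dvdR_trans (hc i _) (IH i.+1 _); lia.
Qed.

Lemma prod_dvd_pow (R : comUnitRingType) (s : nat -> R) (k : nat -> nat) (x : R) N :
  (forall i, (i < N)%N -> dvdR (s i) x) ->
  dvdR (\prod_(i < N) s i ^+ k i) (x ^+ (\sum_(i < N) k i)%N).
Proof.
elim: N => [|N IH] h.
  by rewrite !big_ord0; apply: dvdR_refl.
rewrite !big_ord_recr /= exprD; apply: dvdR_mul2.
  by apply: IH => i hi; apply: h; lia.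
by apply: dvdR_X; apply: h.
Qed.

Lemma top_dvd (R : idomainType) (HR : isUFD R) n' m' (s t : nat -> R) (k l : nat -> nat) (c d : R) :
  (forall i, (i.+1 < n'.+1)%N -> dvdR (s i) (s i.+1)) ->
  squarefree (t m') -> (1 <= l m')%N -> c \is a GRing.unit ->
  c * \prod_(i < n'.+1) s i ^+ k i = d * \prod_(i < m'.+1) t i ^+ l i ->
  dvdR (t m') (s n').
Proof.
move=> hc sq hl cu e.
apply: (sqf_dvd HR (L := (\sum_(i < n'.+1) k i)%N) sq).
apply: dvdR_trans (prod_dvd_pow k _); last by move=> i hi; apply: chain_dvd.
apply: (dvdR_unit cu); rewrite e big_ord_recr /=.
rewrite -(prednK hl) exprS.
exists (d * \prod_(i < m') t i ^+ l i * t m' ^+ (l m').-1); ring.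
Qed.

Lemma top_assoc (R : idomainType) (HR : isUFD R) n' m' (s t : nat -> R) (k l : nat -> nat) (c d : R) :
  (forall i, (i.+1 < n'.+1)%N -> dvdR (s i) (s i.+1)) ->
  (forall i, (i.+1 < m'.+1)%N -> dvdR (t i) (t i.+1)) ->
  squarefree (s n') -> squarefree (t m') -> (1 <= k n')%N -> (1 <= l m')%N ->
  c \is a GRing.unit -> d \is a GRing.unit ->
  c * \prod_(i < n'.+1) s i ^+ k i = d * \prod_(i < m'.+1) t i ^+ l i ->
  assocR (s n') (t m').
Proof.
move=> hs ht sqs sqt hk hl cu du e.
apply: dvd_assoc (sqf_neq0 sqs) _ _.
  exact: (top_dvd HR ht sqs hk du (esym e)).
exact: (top_dvd HR hs sqt hl cu e).
Qed.

Definition decr (k : nat -> nat) (n' : nat) : nat -> nat :=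
  fun i => if i == n' then (k i).-1 else k i.

Lemma prod_decr (R : comUnitRingType) n' (s : nat -> R) (k : nat -> nat) : (1 <= k n')%N ->
 [/\ \prod_(i < n'.+1) s i ^+ k i = (\prod_(i < n'.+1) s i ^+ decr k n' i) * s n',
     \prod_(i < n'.+1) s i ^+ decr k n' i = (\prod_(i < n') s i ^+ k i) * s n' ^+ (k n').-1,
     ((\sum_(i < n'.+1) decr k n' i).+1 = \sum_(i < n'.+1) k i)%N &
     (\sum_(i < n'.+1) k i = \sum_(i < n') k i + k n')%N].
Proof.
move=> hk.
have E1 : \prod_(i < n'.+1) s i ^+ decr k n' i = (\prod_(i < n') s i ^+ k i) * s n' ^+ (k n').-1.
  rewrite big_ord_recr /= /decr eqxx; congr (_ * _); apply: eq_bigr => i _.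
  by rewrite (ltn_eqF (ltn_ord i)).
have E2 : (\sum_(i < n'.+1) decr k n' i = \sum_(i < n') k i + (k n').-1)%N.
  rewrite big_ord_recr /= /decr eqxx; congr (_ + _)%N; apply: eq_bigr => i _.
  by rewrite (ltn_eqF (ltn_ord i)).
have E3 : (\sum_(i < n'.+1) k i = \sum_(i < n') k i + k n')%N by rewrite big_ord_recr.
split => //.
- by rewrite E1 big_ord_recr /= -{1}(prednK hk) exprSr mulrA.
- rewrite E2 E3; lia.
Qed.

Lemma prod_nonunit (R : comUnitRingType) m' (t : nat -> R) (l : nat -> nat) :
  t 0%N \isn't a GRing.unit -> (1 <= l 0%N)%N ->
  \prod_(i < m'.+1) t i ^+ l i \isn't a GRing.unit.
Proof.
move=> tu hl; rewrite big_ord_recl unitrM unitrX_pos //=.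
by rewrite (negPf tu).
Qed.

Lemma main_lemma (R : idomainType) (HR : isUFD R) N : forall
  (n m : nat) (s t : nat -> R) (k l : nat -> nat) (c d : R),
  (\sum_(i < n) k i + \sum_(i < m) l i < N)%N ->
  (forall i, (i < n)%N -> squarefree (s i) /\ s i \isn't a GRing.unit) ->
  (forall i, (i < m)%N -> squarefree (t i) /\ t i \isn't a GRing.unit) ->
  (forall i, (i < n)%N -> (1 <= k i)%N) ->
  (forall i, (i < m)%N -> (1 <= l i)%N) ->
  c \is a GRing.unit -> d \is a GRing.unit ->
  (forall i, (i.+1 < n)%N -> dvdR (s i) (s i.+1) /\ ~ assocR (s i) (s i.+1)) ->
  (forall i, (i.+1 < m)%N -> dvdR (t i) (t i.+1) /\ ~ assocR (t i) (t i.+1)) ->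
  c * \prod_(i < n) s i ^+ k i = d * \prod_(i < m) t i ^+ l i ->
  n = m /\ (forall i, (i < n)%N -> assocR (s i) (t i) /\ k i = l i).
Proof.
elim: N => [|N IH] n m s t k l c d hN hs ht hk hl cu du hcs hct e; first by [].
case: n hN hs hk hcs e => [|n'] hN hs hk hcs e;
  case: m hN ht hl hct e => [|m'] hN ht hl hct e.
- by split.
- exfalso; rewrite big_ord0 mulr1 in e.
  have pu : (\prod_(i < m'.+1) t i ^+ l i) \is a GRing.unit.
    by rewrite -(mulKr du (\prod_(i < m'.+1) t i ^+ l i)) -e unitrM unitrV du cu.
  by move: pu; apply/negP; apply: prod_nonunit; [exact: (ht 0%N isT).2 | exact: hl].
- exfalso; rewrite big_ord0 mulr1 in e.
  have pu : (\prod_(i < n'.+1) s i ^+ k i) \is a GRing.unit.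
    by rewrite -(mulKr cu (\prod_(i < n'.+1) s i ^+ k i)) e unitrM unitrV du cu.
  by move: pu; apply/negP; apply: prod_nonunit; [exact: (hs 0%N isT).2 | exact: hk].
have hsn := hs n' (ltnSn n'). have htm := ht m' (ltnSn m').
have hkn := hk n' (ltnSn n'). have hlm := hl m' (ltnSn m').
have Hst : assocR (s n') (t m').
  apply: (top_assoc HR _ _ hsn.1 htm.1 hkn hlm cu du e).
    by move=> i hi; exact: (hcs i hi).1.
  by move=> i hi; exact: (hct i hi).1.
have [u uu hu] := Hst.
have [Pk1 Pk2 Sk1 Sk2] := prod_decr s hkn.
have [Pl1 Pl2 Sl1 Sl2] := prod_decr t hlm.
have du' : d * u \is a GRing.unit by rewrite unitrM du uu.
have er : c * \prod_(i < n'.+1) s i ^+ decr k n' i = (d * u) * \prod_(i < m'.+1) t i ^+ decr l m' i.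
  apply: (mulIf (sqf_neq0 hsn.1)); rewrite -mulrA -Pk1 e Pl1 hu; ring.
have [hk1|hk1] := eqVneq (k n') 1%N; have [hl1|hl1] := eqVneq (l m') 1%N.
- rewrite Pk2 Pl2 hk1 hl1 /= !expr0 !mulr1 in er.
  have [en hi] := IH n' m' s t k l c (d * u) ltac:(lia)
    ltac:(move=> i hi; apply: hs; lia) ltac:(move=> i hi; apply: ht; lia)
    ltac:(move=> i hi; apply: hk; lia) ltac:(move=> i hi; apply: hl; lia)
    cu du' ltac:(move=> i hi; apply: hcs; lia) ltac:(move=> i hi; apply: hct; lia) er.
  subst m'; split => // i hi'.
  have [hin|hin] := ltnP i n'; first exact: hi.
  have -> : i = n' by lia.
  by split; [exact: Hst | rewrite hk1 hl1].
- rewrite Pk2 hk1 /= expr0 mulr1 in er.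
  have [en hi] := IH n' m'.+1 s t k (decr l m') c (d * u) ltac:(lia)
    ltac:(move=> i hi; apply: hs; lia) ht
    ltac:(move=> i hi; apply: hk; lia)
    ltac:(move=> i hi; rewrite /decr; case: eqP => [->|_]; [move/eqP: hl1; lia | apply: hl; lia])
    cu du' ltac:(move=> i hi; apply: hcs; lia) hct er.
  exfalso; subst n'.
  have [ha _] := hi m' (ltnSn m').
  by apply: (hcs m' (ltnSn _)).2; apply: assoc_trans ha (assoc_sym Hst).
- rewrite Pl2 hl1 /= expr0 mulr1 in er.
  have [en hi] := IH n'.+1 m' s t (decr k n') l c (d * u) ltac:(lia)
    hs ltac:(move=> i hi; apply: ht; lia)
    ltac:(move=> i hi; rewrite /decr; case: eqP => [->|_]; [move/eqP: hk1; lia | apply: hk; lia])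
    ltac:(move=> i hi; apply: hl; lia)
    cu du' hcs ltac:(move=> i hi; apply: hct; lia) er.
  exfalso; subst m'.
  have [ha _] := hi n' (ltnSn n').
  by apply: (hct n' (ltnSn _)).2; apply: assoc_trans (assoc_sym ha) Hst.
- have [en hi] := IH n'.+1 m'.+1 s t (decr k n') (decr l m') c (d * u) ltac:(lia)
    hs ht
    ltac:(move=> i hi; rewrite /decr; case: eqP => [->|_]; [move/eqP: hk1; lia | apply: hk; lia])
    ltac:(move=> i hi; rewrite /decr; case: eqP => [->|_]; [move/eqP: hl1; lia | apply: hl; lia])
    cu du' hcs hct er.
  case: en => en; subst m'; split => // i hi'.
  have [ha hd] := hi i hi'; split => //.
  move: hd; rewrite /decr; case: eqP => [->|_] //.
  move/eqP: hk1; move/eqP: hl1; lia.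
Qed.

(* Indices 1..n of the paper are shifted to 0..n-1. *)
Theorem proposition2 (R : idomainType) (HR : isUFD R)
  (n m : nat) (s t : nat -> R) (k l : nat -> nat) (c d : R) :
  (1 <= n)%N -> (1 <= m)%N ->
  (forall i, (i < n)%N -> squarefree (s i) /\ s i \isn't a GRing.unit) ->
  (forall i, (i < m)%N -> squarefree (t i) /\ t i \isn't a GRing.unit) ->
  (forall i, (i < n)%N -> (1 <= k i)%N) ->
  (forall i, (i < m)%N -> (1 <= l i)%N) ->
  c \is a GRing.unit -> d \is a GRing.unit ->
  (forall i, (i.+1 < n)%N -> dvdR (s i) (s i.+1) /\ ~ assocR (s i) (s i.+1)) ->
  (forall i, (i.+1 < m)%N -> dvdR (t i) (t i.+1) /\ ~ assocR (t i) (t i.+1)) ->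
  c * \prod_(i < n) s i ^+ k i = d * \prod_(i < m) t i ^+ l i ->
  n = m /\ (forall i, (i < n)%N -> assocR (s i) (t i) /\ k i = l i).
Proof.
move=> _ _.
exact: (main_lemma HR (N := (\sum_(i < n) k i + \sum_(i < m) l i).+1)).
Qed.
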